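(* Let $R$ be a semi-local ring with maximal ideals $M_1,\dots,M_t$, and $n$ a positive integer. If for all nonnegative integers $\alpha_1,\dots,\alpha_t$ with $\alpha_1+\cdots+\alpha_t=n+1$ we have $M_1^{\alpha_1}\cdots M_t^{\alpha_t}=\{0\}$, then every proper ideal of $R$ is weakly $n$-absorbing.
   Context: All rings are commutative with $1\neq0$; a semi-local ring has finitely many maximal ideals. A proper ideal $I$ of $R$ is weakly $n$-absorbing if whenever $0\neq a_1\cdots a_{n+1}\in I$ with $a_1,\dots,a_{n+1}\in R$, there are $n$ of the $a_i$'s whose product is in $I$. *)

(* Defs.v *)
From mathcomp Require Import all_boot all_algebra.
Set Implicit Arguments. Unset Strict Implicit. Unset Printing Implicit Defensive.
Import GRing.Theory.
Local Open Scope ring_scope.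

Section IdealDefs.
Variable R : comNzRingType.

Definition is_idl (I : R -> Prop) : Prop :=
  [/\ I 0,
      (forall x y, I x -> I y -> I (x + y)),
      (forall x, I x -> I (- x)) &
      (forall r x, I x -> I (r * x))].

Definition proper_idl (I : R -> Prop) : Prop := is_idl I /\ ~ I 1.

Definition maximal_idl (M : R -> Prop) : Prop :=
  proper_idl M /\
  forall J : R -> Prop, is_idl J -> (forall x, M x -> J x) ->
    (forall x, J x <-> M x) \/ (forall x, J x).

Definition ideal_mul (I J : R -> Prop) : R -> Prop :=
  fun x => exists s : seq (R * R),
    (forall p, p \in s -> I p.1 /\ J p.2) /\
    x = \sum_(p <- s) p.1 * p.2.

Definition ideal_unit : R -> Prop := fun _ => True.

Fixpoint ideal_pow (I : R -> Prop) (k : nat) : R -> Prop :=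
  match k with
  | O => ideal_unit
  | S k' => ideal_mul I (ideal_pow I k')
  end.

Definition ideal_prod_pow (t : nat) (M : 'I_t -> R -> Prop) (a : 'I_t -> nat)
  : R -> Prop :=
  foldr ideal_mul ideal_unit [seq ideal_pow (M i) (a i) | i <- enum 'I_t].

Definition weakly_n_absorbing (n : nat) (I : R -> Prop) : Prop :=
  proper_idl I /\
  forall a : 'I_n.+1 -> R,
    \prod_(i < n.+1) a i != 0 -> I (\prod_(i < n.+1) a i) ->
    exists j : 'I_n.+1, I (\prod_(i < n.+1 | i != j) a i).

End IdealDefs.

(* Main.v *)
Require Import Defs.
From mathcomp Require Import all_boot all_algebra.
From mathcomp Require Import boolp classical_sets.
Import GRing.Theory.
Local Open Scope classical_set_scope.
Local Open Scope ring_scope.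

Section Aux.
Variable R : comNzRingType.

Lemma mul_in_ideal_mul (K L : R -> Prop) x y :
  K x -> L y -> ideal_mul K L (x * y).
Proof.
move=> Kx Ly; exists [:: (x, y)]; split.
  by move=> p; rewrite inE => /eqP ->.
by rewrite big_cons big_nil addr0.
Qed.

Lemma prod_in_pow (I : eqType) (M : R -> Prop) (a : I -> R) (s : seq I) :
  (forall i, i \in s -> M (a i)) -> ideal_pow M (size s) (\prod_(i <- s) a i).
Proof.
elim: s => [|j s IH] H /=; first by [].
rewrite big_cons; apply: mul_in_ideal_mul; first by apply: H; rewrite inE eqxx.
by apply: IH => i Hi; apply: H; rewrite inE Hi orbT.
Qed.

Lemma prod_in_foldr (I : eqType) (K : I -> R -> Prop) (G : I -> R) (s : seq I) :
  (forall j, j \in s -> K j (G j)) ->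
  foldr (ideal_mul (R:=R)) (ideal_unit (R:=R)) [seq K j | j <- s]
    (\prod_(j <- s) G j).
Proof.
elim: s => [|j s IH] H /=; first by [].
rewrite big_cons; apply: mul_in_ideal_mul; first by apply: H; rewrite inE eqxx.
by apply: IH => i Hi; apply: H; rewrite inE Hi orbT.
Qed.

Lemma nonunit_in_max (x : R) : ~ (exists u, u * x = 1) ->
  exists N : R -> Prop, maximal_idl N /\ N x.
Proof.
move=> nu.
pose P (X : set R) := (forall y, ~ X y) \/ (is_idl X /\ ~ X 1 /\ X x).
have xR : P (fun y => exists r, y = r * x).
  right; split; last split.
  - split; first by exists 0; rewrite mul0r.
    + by move=> y z [r ->] [s ->]; exists (r + s); rewrite mulrDl.
    + by move=> y [r ->]; exists (- r); rewrite mulNr.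
    + by move=> r y [s ->]; exists (r * s); rewrite mulrA.
  - by move=> [r H]; apply: nu; exists r.
  - by exists 1; rewrite mul1r.
have chain : forall F : set (set R), F `<=` P -> total_on F subset ->
    P (\bigcup_(X in F) X).
  move=> F FP tot.
  have [[X0 [FX0 [y0 X0y0]]]|none] := pselect (exists X0, F X0 /\ exists y, X0 y);
    last first.
    by left => y [X FX Xy]; apply: none; exists X; split => //; exists y.
  have FX0' : is_idl X0 /\ ~ X0 1 /\ X0 x.
    by case: (FP _ FX0) => [H|//]; case: (H y0).
  have idl : forall X y, F X -> X y -> is_idl X /\ ~ X 1 /\ X x.
    by move=> X y FX Xy; case: (FP _ FX) => [H|//]; case: (H y).
  right; split; last split.
  - split.
    + by exists X0 => //; case: FX0'.1.
    + move=> y z [X FX Xy] [Y FY Yz].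
      have [XY|YX] := tot _ _ FX FY.
      * exists Y => //; have [[_ Hadd _ _] _] := idl _ _ FY Yz.
        by apply: Hadd => //; apply: XY.
      * exists X => //; have [[_ Hadd _ _] _] := idl _ _ FX Xy.
        by apply: Hadd => //; apply: YX.
    + move=> y [X FX Xy]; exists X => //.
      by have [[_ _ Hn _] _] := idl _ _ FX Xy; apply: Hn.
    + move=> r y [X FX Xy]; exists X => //.
      by have [[_ _ _ Hm] _] := idl _ _ FX Xy; apply: Hm.
  - by move=> [X FX X1]; have [_ [H _]] := idl _ _ FX X1.
  - by exists X0 => //; case: FX0' => _ [].
have [A [PA maxA]] := Zorn_bigcup chain.
have [Anil|[Aid [A1 Ax]]] := PA.
  exfalso; apply: (maxA _ _ xR); split; first by move=> y /Anil.
  by move=> H; apply: (Anil 0); apply: H; exists 0; rewrite mul0r.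
exists A; split => //; split => //.
move=> J Jid AJ.
have [J1|nJ1] := pselect (J 1).
  by right => r; have [_ _ _ Hm] := Jid; rewrite -(mulr1 r); apply: Hm.
left; have [JA|nJA] := pselect (J `<=` A).
  by move=> y; split; [apply: JA|apply: AJ].
exfalso; apply: (maxA J); first by split.
by right; split => //; split => //; apply: AJ.
Qed.

End Aux.

Theorem mainTheorem19 (R : comNzRingType) (t : nat) (M : 'I_t -> R -> Prop)
  (n : nat) :
  (* M_1, ..., M_t are exactly the (distinct) maximal ideals of R *)
  (forall i, maximal_idl (M i)) ->
  (forall i j, (forall x, M i x <-> M j x) -> i = j) ->
  (forall N : R -> Prop, maximal_idl N ->
     exists i, forall x, N x <-> M i x) ->
  (0 < n)%N ->
  (forall a : 'I_t -> nat, (\sum_(i < t) a i)%N = n.+1 ->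
     forall x, ideal_prod_pow M a x -> x = 0) ->
  forall I : R -> Prop, proper_idl I -> weakly_n_absorbing n I.
Proof.
move=> Mmax _ Mall _ Hzero I PI; split => // a a0 Ia.
have [[j [u Hu]]|nounit] :=
  pselect (exists j : 'I_n.+1, exists u, u * a j = 1); last first.
  exfalso.
  have Hin : forall i, exists k, M k (a i).
    move=> i; have [N [NM Nx]] := @nonunit_in_max R (a i)
      (fun H => nounit (ex_intro _ i H)).
    by have [k Hk] := Mall N NM; exists k; apply/Hk.
  pose f i := proj1_sig (cid (Hin i)).
  have Hf i : M (f i) (a i) by rewrite /f; case: cid.
  pose al (k : 'I_t) := #|[pred i | f i == k]|.
  have sum_al : (\sum_(k < t) al k)%N = n.+1.
    rewrite -{1}(card_ord n.+1) -sum1_card (partition_big f predT) //=.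
    by apply: eq_bigr => k _; rewrite /al sum1_card.
  move/eqP: a0; apply.
  apply: (Hzero al sum_al).
  rewrite (partition_big f predT) //=.
  rewrite /ideal_prod_pow -big_enum.
  apply: prod_in_foldr => k _.
  rewrite /al cardE -big_enum /=.
  have -> : \prod_(i <- enum [pred i | f i == k]) a i =
            \prod_(i <- enum [pred i | f i == k]) a i by [].
  rewrite big_enum /=.
  rewrite -big_enum; apply: prod_in_pow => i; rewrite mem_enum inE => /eqP <-.
  exact: Hf.
exists j.
have -> : \prod_(i < n.+1 | i != j) a i = u * \prod_(i < n.+1) a i.
  by rewrite [X in _ = _ * X](bigD1 j) //= mulrA Hu mul1r.
by case: PI => [[_ _ _ Hm] _]; apply: Hm.
Qed.
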